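(* Let $(\pi_r)_{r\in\mathbb{N}}$ be periods, let $(K_t)_{t\in\mathbb{N}}$ be the multiperiodic process with periods $(\pi_r)$, and let $W_r:=\inf\{t\in\mathbb{N}:K_t=r\}$. If $r\in\mathbb{N}$ is such that $\pi_i\ge2$ for all $1\le i\le r-1$, then (for every realization of the seeds) $$W_r\le \bar w_r:=\left(\cdots\left(\left(\pi_r\cdot\frac{\pi_{r-1}}{\pi_{r-1}-1}+1\right)\frac{\pi_{r-2}}{\pi_{r-2}-1}+1\right)\cdots\frac{\pi_1}{\pi_1-1}+1\right),$$ i.e. $\bar w_r=v_1$ where $v_r:=\pi_r$ and $v_i:=v_{i+1}\,\pi_i/(\pi_i-1)+1$ for $i=r-1,\dots,1$.
   Context: $\mathbb{N}=\{1,2,3,\dots\}$. Multiperiodic sequence with periods $\pi_r\in\mathbb{N}$ and seeds $\sigma_r\in\{1,\dots,\pi_r\}$: the sequence $(k_t)_{t\in\mathbb{N}}$ with values in $\mathbb{N}\cup\{\infty\}$ such that for each $r$, the subsequence obtained from $(k_t)$ by deleting all tokens $k_t<r$, denoted $(k^{(r)}_t)_{t\in\mathbb{N}}$, satisfies $k^{(r)}_t=r\iff t\equiv\sigma_r\pmod{\pi_r}$; entries left undefined for all $r$ are set to $\infty$. Equivalently: clocks $\phi_r$ start at $\sigma_r$; for each token, scan $r=1,2,\dots$, decrementing each clock with $\phi_r>1$, until the first $r$ with $\phi_r=1$, output that $r$ and reset $\phi_r=\pi_r$. The multiperiodic process with periods $(\pi_r)$ is the random multiperiodic sequence with these periods and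 independent random seeds $\Sigma_r$ uniformly distributed on $\{1,\dots,\pi_r\}$. *)

(* Defs.v *)
From HB Require Import structures.
From mathcomp Require Import all_boot all_order all_algebra.
From Stdlib Require Import ClassicalEpsilon.
Set Implicit Arguments. Unset Strict Implicit. Unset Printing Implicit Defensive.
Import Order.TTheory GRing.Theory Num.Theory.

(* Clocks: phi r for r >= 1 (index 0 is unused). *)
Definition clocks := nat -> nat.

(* Processing one token: scan r = 1,2,...; the output is the least r >= 1
   with phi r = 1 (None encodes the value infinity, when no such r exists). *)
Definition mp_step (pi : nat -> nat) (phi : clocks) : option nat * clocks :=
  match excluded_middle_informative (exists r, (0 < r) && (phi r == 1)) with
  | left H =>
      let r := ex_minn H in
      (Some r, fun i => if i < r then (phi i).-1 else if i == r then pi r else phi i)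
  | right _ => (None, fun i => (phi i).-1)
  end.

Fixpoint mp_state (pi sigma : nat -> nat) (n : nat) : clocks :=
  match n with
  | 0 => sigma
  | n'.+1 => (mp_step pi (mp_state pi sigma n')).2
  end.

(* The multiperiodic sequence k_t, t = 1,2,... (None = infinity). *)
Definition mp_seq (pi sigma : nat -> nat) (t : nat) : option nat :=
  (mp_step pi (mp_state pi sigma t.-1)).1.

(* v_r := pi_r, v_i := v_{i+1} pi_i/(pi_i - 1) + 1;
   mp_v_aux pi r k = v_{r-k}. *)
Fixpoint mp_v_aux (pi : nat -> nat) (r k : nat) : rat :=
  match k with
  | 0 => (pi r)%:R
  | k'.+1 =>
      let i := (r - k)%N in
      (mp_v_aux pi r k' * (pi i)%:R / ((pi i)%:R - 1) + 1)%R
  end.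

Definition wbar (pi : nat -> nat) (r : nat) : rat := mp_v_aux pi r r.-1.

(* Main.v *)
Require Import Defs.
From HB Require Import structures.
From mathcomp Require Import all_boot all_order all_algebra.
From mathcomp Require Import zify ring lra.
From Stdlib Require Import Classical ClassicalEpsilon.
Import Order.TTheory GRing.Theory Num.Theory.

Fixpoint Phi (pi : nat -> nat) (phi : clocks) (r k : nat) : rat :=
  match k with
  | 0 => (phi r)%:R
  | k'.+1 =>
      let i := (r - k)%N in
      ((Phi pi phi r k' * (pi i)%:R + (pi i)%:R - 1 - (phi i)%:R) / ((pi i)%:R - 1))%R
  end.

Lemma step_spec pi phi : (forall i, 0 < i -> 1 <= phi i) ->
  (exists s, [/\ 0 < s, (mp_step pi phi).1 = Some s,
     forall i, 0 < i < s -> 2 <= phi i, phi s = 1 &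
     (mp_step pi phi).2 = fun i => if i < s then (phi i).-1 else if i == s then pi s else phi i])
  \/ ((mp_step pi phi).1 = None /\ (forall i, 0 < i -> 2 <= phi i) /\
      (mp_step pi phi).2 = fun i => (phi i).-1).
Proof.
move=> hge1; rewrite /mp_step; case: excluded_middle_informative => [H|H].
  left; case: ex_minnP => s /andP[s0 /eqP ps1] smin; exists s; split => //.
  move=> i /andP[i0 ilt]; have := hge1 i i0; rewrite leq_eqVlt => /orP[/eqP e|//].
  have := smin i; rewrite i0 -e eqxx => /(_ isT); move: ilt; lia.
right; split; first done; split; last done.
move=> i i0; have := hge1 i i0; rewrite leq_eqVlt => /orP[/eqP e|//].
exfalso; apply H; exists i; rewrite i0 -e; done.
Qed.

Lemma divstep (a b q : rat) : (0 < q -> a + q <= b -> a / q + 1 <= b / q)%R.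
Proof.
move=> q0 h; have -> : (a / q + 1 = (a + q) / q)%R by field; lra.
by rewrite ler_pM2r ?invr_gt0.
Qed.

Section S.
Variables (pi : nat -> nat) (r : nat).
Local Open Scope ring_scope.

Lemma Phi_ge1 phi k : (k < r)%N ->
  (forall i, (r - k <= i <= r)%N -> (1 <= phi i <= pi i)%N) ->
  (forall i, (r - k <= i < r)%N -> (2 <= pi i)%N) -> 1 <= Phi pi phi r k.
Proof.
elim: k => [|k IH] kr hphi hpi /=.
  have := hphi r; rewrite subn0 leqnn => /(_ isT) /andP[h _].
  by rewrite ler1n.
have IH' := IH (ltnW kr) (fun i hi => hphi i ltac:(lia)) (fun i hi => hpi i ltac:(lia)).
set i := (r - k.+1)%N.
have p2 := hpi i ltac:(lia). have /andP[c1 cp] := hphi i ltac:(lia).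
have p2' : (2 <= (pi i)%:R :> rat) by rewrite ler_nat.
have cp' : ((phi i)%:R <= (pi i)%:R :> rat) by rewrite ler_nat.
rewrite ler_pdivlMr; last lra.
nra.
Qed.

Lemma Phi_le_v phi k : (k < r)%N -> (phi r <= pi r)%N ->
  (forall i, (r - k <= i < r)%N -> (1 <= phi i)%N) ->
  (forall i, (r - k <= i < r)%N -> (2 <= pi i)%N) -> Phi pi phi r k <= mp_v_aux pi r k.
Proof.
elim: k => [|k IH] kr hr hphi hpi /=; first by rewrite ler_nat.
have IH' := IH (ltnW kr) hr (fun i hi => hphi i ltac:(lia)) (fun i hi => hpi i ltac:(lia)).
set i := (r - k.+1)%N.
have p2 := hpi i ltac:(lia). have c1 := hphi i ltac:(lia).
have p2' : (2 <= (pi i)%:R :> rat) by rewrite ler_nat.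
have c1' : (1 <= (phi i)%:R :> rat) by rewrite ler1n.
have -> : mp_v_aux pi r k * (pi i)%:R / ((pi i)%:R - 1) + 1 =
   (mp_v_aux pi r k * (pi i)%:R + ((pi i)%:R - 1)) / ((pi i)%:R - 1).
  by field; lra.
have hq : 0 < (pi i)%:R - 1 :> rat by lra.
rewrite ler_pM2r ?invr_gt0 //; nra.
Qed.

Lemma decA phi phi' k : (k < r)%N ->
  (forall i, (r - k <= i <= r)%N -> (phi' i).+1 = phi i) ->
  (forall i, (r - k <= i < r)%N -> (2 <= pi i)%N) ->
  Phi pi phi' r k + 1 <= Phi pi phi r k.
Proof.
elim: k => [|k IH] kr hphi hpi /=.
  by have := hphi r; rewrite subn0 leqnn => /(_ isT) <-; rewrite -natr1.
have IH' := IH (ltnW kr) (fun i hi => hphi i ltac:(lia)) (fun i hi => hpi i ltac:(lia)).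
set i := (r - k.+1)%N.
have p2 := hpi i ltac:(lia). have c := hphi i ltac:(lia).
have p2' : (2 <= (pi i)%:R :> rat) by rewrite ler_nat.
have c' : (phi i)%:R = (phi' i)%:R + 1 :> rat by rewrite -c -natr1.
have hq : 0 < (pi i)%:R - 1 :> rat by lra.
rewrite c'; apply: divstep => //; nra.
Qed.

Lemma decB1 phi phi' s k : (s < r - k)%N ->
  (forall i, (s < i <= r)%N -> phi' i = phi i) ->
  Phi pi phi' r k = Phi pi phi r k.
Proof.
elim: k => [|k IH] hs hphi /=.
  by rewrite hphi //; lia.
by rewrite IH ?hphi //; lia.
Qed.

Lemma decB2 phi phi' s k : (0 < s < r)%N -> (k < r)%N -> (r - k <= s)%N ->
  (forall i, (r - k <= i < s)%N -> (phi' i).+1 = phi i) ->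
  phi s = 1%N -> phi' s = pi s ->
  (forall i, (s < i <= r)%N -> phi' i = phi i) ->
  (forall i, (r - k <= i < r)%N -> (2 <= pi i)%N) ->
  Phi pi phi' r k + 1 <= Phi pi phi r k.
Proof.
move=> hs; elim: k => [|k IH] kr hk hdec h1 hres heq hpi /=; first lia.
set i := (r - k.+1)%N.
have p2 := hpi i ltac:(lia).
have p2' : (2 <= (pi i)%:R :> rat) by rewrite ler_nat.
have hq : 0 < (pi i)%:R - 1 :> rat by lra.
apply: divstep => //.
case: (leqP (r - k) s) => hk'.
  have IH' := IH (ltnW kr) hk' (fun i hi => hdec i ltac:(lia)) h1 hres heq
     (fun i hi => hpi i ltac:(lia)).
  have c := hdec i ltac:(lia).
  have c' : (phi i)%:R = (phi' i)%:R + 1 :> rat by rewrite -c -natr1.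
  rewrite c'; nra.
have -> : i = s by rewrite /i; lia.
rewrite (@decB1 phi phi' s k) //; try lia.
rewrite h1 hres; lra.
Qed.

End S.

Lemma state_inv pi sigma (hpi : forall i, 0 < i -> 0 < pi i)
  (hsigma : forall i, 0 < i -> 1 <= sigma i <= pi i) n i :
  0 < i -> 1 <= mp_state pi sigma n i <= pi i.
Proof.
elim: n i => [|n IH] i i0 /=; first exact: hsigma.
have hge1 : forall j, 0 < j -> 1 <= mp_state pi sigma n j.
  by move=> j j0; case/andP: (IH j j0).
case: (@step_spec pi _ hge1) => [[s [s0 _ hlt _ ->]]|[_ [hall ->]]].
  have := IH i i0; have := hpi i i0.
  case: (ltnP i s) => isl.
    have := hlt i ltac:(lia); lia.
  case: eqP => [->|_]; last done.
  have := hpi s s0; lia.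
have := IH i i0; have := hall i i0; lia.
Qed.

Lemma one_step pi r phi (hr : 0 < r)
  (hinv : forall i, 0 < i -> 1 <= phi i <= pi i)
  (h2 : forall i, 1 <= i <= r.-1 -> 2 <= pi i) :
  (mp_step pi phi).1 <> Some r ->
  (Phi pi (mp_step pi phi).2 r r.-1 + 1 <= Phi pi phi r r.-1)%R.
Proof.
have hge1 : forall j, 0 < j -> 1 <= phi j by move=> j j0; case/andP: (hinv j j0).
have hpi' : forall i, (r - r.-1 <= i < r)%N -> (2 <= pi i)%N.
  by move=> i hi; apply: h2; lia.
case: (@step_spec pi _ hge1) => [[s [s0 -> hlt hs1 ->]]|[_ [hall ->]]] hne.
  case: (ltngtP s r) => hsr.
  - apply: (@decB2 _ _ _ _ s) => //; try lia.
    + move=> i hi; rewrite ifT; last lia. have := hlt i ltac:(lia); lia.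
    + by rewrite ltnn eqxx.
    + move=> i hi; rewrite ifF; last lia. rewrite ifF //; apply/eqP; lia.
  - apply: decA => //; first lia.
    move=> i hi; rewrite ifT; last lia. have := hlt i ltac:(lia); lia.
  - by subst s.
apply: decA => //; first lia.
move=> i hi; have := hall i ltac:(lia); lia.
Qed.

Theorem theorem5 (pi sigma : nat -> nat)
  (hpi : forall i, 0 < i -> 0 < pi i)
  (hsigma : forall i, 0 < i -> 1 <= sigma i <= pi i)
  (r : nat) (hr : 0 < r)
  (h2 : forall i, 1 <= i <= r.-1 -> 2 <= pi i) :
  exists t : nat, [/\ 0 < t, mp_seq pi sigma t = Some r & (t%:R <= wbar pi r)%R].
Proof.
pose P n := Phi pi (mp_state pi sigma n) r r.-1.
have hinv := @state_inv pi sigma hpi hsigma.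
have P1 : forall n, (1 <= P n)%R.
  move=> n; apply: Phi_ge1; first lia.
    by move=> i hi; apply: hinv; lia.
  by move=> i hi; apply: h2; lia.
have dec : forall n, (forall t, 0 < t <= n -> mp_seq pi sigma t <> Some r) ->
    (P n + n%:R <= P 0)%R.
  elim=> [|n IH] hn; first by rewrite addr0.
  have := @one_step pi r _ hr (hinv n) h2 (hn n.+1 ltac:(lia)).
  have := IH (fun t ht => hn t ltac:(lia)).
  rewrite /P /= -natr1; lra.
have Pw : (P 0 <= wbar pi r)%R.
  apply: Phi_le_v; first lia.
  - by have := hsigma r hr => /andP[].
  - by move=> i hi; have := hsigma i ltac:(lia) => /andP[].
  - by move=> i hi; apply: h2; lia.
have ex : exists t, (0 < t) && (mp_seq pi sigma t == Some r).
  apply: NNPP => hno.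
  have hb := @archi_boundP _ (P 0) ltac:(have := P1 0; lra).
  have := dec (Num.Def.archi_bound (P 0)).
  have := P1 (Num.Def.archi_bound (P 0)).
  suff H : forall t, 0 < t <= Num.Def.archi_bound (P 0) -> mp_seq pi sigma t <> Some r.
    move=> h1 /(_ H); lra.
  move=> t ht he; apply: hno; exists t; rewrite he eqxx andbT; lia.
case: (ex_minnP ex) => t /andP[t0 /eqP ht] tmin.
exists t; split => //.
have := dec t.-1.
have H : forall t', 0 < t' <= t.-1 -> mp_seq pi sigma t' <> Some r.
  move=> t' h' he; have := tmin t'; rewrite he eqxx andbT; lia.
move=> /(_ H); have := P1 t.-1.
have -> : t = (t.-1).+1 by lia.
rewrite -natr1 succnK; lra.
Qed.
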